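(* Let $K\ge1$, $T\ge1$ and $\ell_1,\dots,\ell_T\in[0,1]^K$. AdaHedge's cumulative mixability gap satisfies \[ \big(\Delta^{\mathrm{ah}}_T\big)^2\le V^{\mathrm{ah}}_T\ln K+\big(1+\tfrac23\ln K\big)\Delta^{\mathrm{ah}}_T. \]
   Context: Hedge setting: $K$ experts; in round $t$ the learner chooses a probability vector $w_t$, then $\ell_t$ is revealed and the learner suffers $h_t=\sum_kw_{t,k}\ell_{t,k}$. Write $L_{t,k}=\sum_{s=1}^t\ell_{s,k}$ ($L_{0,k}=0$), $L^*_t=\min_kL_{t,k}$. Exponential weights with learning rate $\eta\in(0,\infty]$ at time $t$: $w_{t,k}=e^{-\eta L_{t-1,k}}/\sum_je^{-\eta L_{t-1,j}}$ if $\eta<\infty$; for $\eta=\infty$, $w_t$ uniform on $\{k:L_{t-1,k}=L^*_{t-1}\}$. With learning rate $\eta_t$ in round $t$: mix loss $m_t=-\frac1{\eta_t}\ln\sum_kw_{t,k}e^{-\eta_t\ell_{t,k}}$ if $\eta_t<\infty$, $m_t=L^*_t-L^*_{t-1}$ if $\eta_t=\infty$; mixability gap $\delta_t=h_t-m_t$; loss variance $v_t=\sum_kw_{t,k}(\ell_{t,k}-h_t)^2$. AdaHedge: $\Delta^{\mathrm{ah}}_0=0$; in round $t$, $\eta^{\mathrm{ah}}_t=\ln K/\Delta^{\mathrm{ah}}_{t-1}$ ($=\infty$ if $\Delta^{\mathrm{ah}}_{t-1}=0$), weights are exponential weights with learning rate $\eta^{\mathrm{ah}}_t$ from $L_{t-1}$,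 and $\Delta^{\mathrm{ah}}_t=\Delta^{\mathrm{ah}}_{t-1}+\delta^{\mathrm{ah}}_t$. $V^{\mathrm{ah}}_T=\sum_{t\le T}v^{\mathrm{ah}}_t$. *)

(* Defs.v *)
From mathcomp Require Import all_boot all_order all_algebra.
From mathcomp Require Import all_classical all_reals all_analysis.
Set Implicit Arguments. Unset Strict Implicit. Unset Printing Implicit Defensive.
Import Order.TTheory GRing.Theory Num.Theory.
Local Open Scope ring_scope.

Section AdaHedge.
Variable R : realType.
Variable K : nat.

Definition fmin : ('I_K -> R) -> R :=
  match K as n return ('I_n -> R) -> R with
  | 0 => fun _ => 0
  | n.+1 => fun f => \big[Num.min/f ord0]_(i < n.+1) f i
  end.

(* losses: l t k is the loss of expert k in round t (rounds t = 1, 2, ...) *)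
Variable l : nat -> 'I_K -> R.

Definition Lcum (t : nat) (k : 'I_K) : R := \sum_(1 <= s < t.+1) l s k.
Definition Lstar (t : nat) : R := fmin (Lcum t).

(* learning rates in (0, +oo]: None encodes eta = +oo *)
Definition lrate := option R.

Definition ew (eta : lrate) (Lp : 'I_K -> R) (k : 'I_K) : R :=
  match eta with
  | Some e => expR (- e * Lp k) / \sum_(j < K) expR (- e * Lp j)
  | None => if Lp k == fmin Lp
            then 1 / (#|[set j : 'I_K | Lp j == fmin Lp]|)%:R else 0
  end.

Definition wts (eta : lrate) (t : nat) : 'I_K -> R := ew eta (Lcum t.-1).

Definition hloss (eta : lrate) (t : nat) : R :=
  \sum_(k < K) wts eta t k * l t k.

Definition mixloss (eta : lrate) (t : nat) : R :=
  match eta with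
  | Some e => - (1 / e) * ln (\sum_(k < K) wts eta t k * expR (- e * l t k))
  | None => Lstar t - Lstar t.-1
  end.

Definition mixgap (eta : lrate) (t : nat) : R := hloss eta t - mixloss eta t.

Definition lossvar (eta : lrate) (t : nat) : R :=
  \sum_(k < K) wts eta t k * (l t k - hloss eta t) ^+ 2.

Definition ah_eta (D : R) : lrate :=
  if D == 0 then None else Some (ln (K%:R) / D).

Fixpoint ah_Delta (t : nat) : R :=
  match t with
  | 0 => 0
  | t'.+1 => ah_Delta t' + mixgap (ah_eta (ah_Delta t')) t'.+1
  end.

Definition ah_rate (t : nat) : lrate := ah_eta (ah_Delta t.-1).

Definition ah_V (T : nat) : R := \sum_(1 <= t < T.+1) lossvar (ah_rate t) t.

End AdaHedge.

(* Main.v *)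
Require Import Defs.
From mathcomp Require Import all_boot all_order all_algebra.
From mathcomp Require Import all_classical all_reals all_analysis.
From mathcomp Require Import ring lra.
Import Order.TTheory GRing.Theory Num.Theory numFieldNormedType.Exports.
Local Open Scope ring_scope.
Section S.
Variable R : realType.
Lemma deriv_mono (f df : R -> R) (a b : R) : a <= b ->
  (forall x : R, is_derive x (1:R) f (df x)) -> (forall x, a <= x <= b -> 0 <= df x) -> f a <= f b.
Proof.
move=> ab fd dpos.
have [|c cab E] := MVT_segment ab (fun x _ => fd x).
  have cf : continuous (f : R -> R).
    move=> x; exact/differentiable_continuous/derivable1_diffP/ex_derive.
  exact: continuous_subspaceT.
rewrite -subr_ge0 E mulr_ge0 ?subr_ge0 //; apply: dpos.
by move: cab; rewrite in_itv.
Qed.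

Lemma deriv_anti (f df : R -> R) (a b : R) : a <= b ->
  (forall x : R, is_derive x (1:R) f (df x)) -> (forall x, a <= x <= b -> df x <= 0) -> f b <= f a.
Proof.
move=> ab fd dneg.
have := @deriv_mono (- f) (fun x => - df x) a b ab (fun x => is_deriveN (fd x)).
rewrite /= lerN2; apply => x /dneg; by rewrite oppr_ge0.
Qed.

Lemma two (x : R) : 2^-1 * (2 * x) = x.
Proof. by rewrite mulrA mulVf ?mul1r // pnatr_eq0. Qed.

Lemma H_le (y : R) : y <= 0 -> expR y - 1 - y <= y^+2/2.
Proof.
move=> y0.
pose f := ((expR : R -> R) - (cst 1 + id + 2^-1 *: (@id R) ^+ 2)).
have fd (x : R) : is_derive x (1:R) f (expR x - (1 + x)).
  have := is_deriveB (is_derive_expR x)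
    (is_deriveD (is_deriveD (is_derive_cst (1:R) x (1:R)) (is_derive_id x (1:R)))
      (is_deriveZ (2^-1 : R) (is_deriveX 2 (is_derive_id x (1:R))))).
  move/is_derive_eq; apply.
  by rewrite /= /GRing.scale /= mulr1 expr1 two add0r.
have := @deriv_mono f _ y 0 y0 fd (fun x _ => ltac:(by rewrite subr_ge0 expR_ge1Dx)).
rewrite /f !fctE /GRing.scale /= expR0 expr0n /= mulr0 !addr0 subrr => h.
lra.
Qed.

Lemma Q_le (u : R) : u <= 0 -> expR u * (1 - u + u^+2/2) <= 1.
Proof.
move=> u0.
pose f := ((expR : R -> R) * (cst 1 - id + 2^-1 *: (@id R) ^+ 2)).
have fd (x : R) : is_derive x (1:R) f (expR x * (x^+2/2)).
  have := is_deriveM (is_derive_expR x)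
    (is_deriveD (is_deriveB (is_derive_cst (1:R) x (1:R)) (is_derive_id x (1:R)))
      (is_deriveZ (2^-1 : R) (is_deriveX 2 (is_derive_id x (1:R))))).
  move/is_derive_eq; apply.
  rewrite /= ?fctE /= /GRing.scale /= mulr1 expr1 two add0r.
  ring.
have := @deriv_mono f _ u 0 u0 fd (fun x _ => ltac:(by rewrite mulr_ge0 ?expR_ge0 // mulr_ge0 ?sqr_ge0)).
rewrite /f !fctE /GRing.scale /= expR0 expr0n /= mulr0 subr0 addr0 mul1r => h.
lra.
Qed.

Lemma F2_le (u : R) : u <= 0 -> 6 + 2 * u <= expR u * (6 - 4 * u + u^+2).
Proof.
move=> u0.
pose f := ((expR : R -> R) * (cst 6 - 4 *: id + (@id R) ^+ 2) - (cst 6 + 2 *: id)).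
have fd (x : R) : is_derive x (1:R) f (expR x * (2 - 2 * x + x^+2) - 2).
  have := is_deriveB (is_deriveM (is_derive_expR x)
    (is_deriveD (is_deriveB (is_derive_cst (6:R) x (1:R)) (is_deriveZ (4:R) (is_derive_id x (1:R))))
      (is_deriveX 2 (is_derive_id x (1:R)))))
    (is_deriveD (is_derive_cst (6:R) x (1:R)) (is_deriveZ (2:R) (is_derive_id x (1:R)))).
  move/is_derive_eq; apply.
  rewrite /= ?fctE /= /GRing.scale /=.
  ring.
have := @deriv_anti f _ u 0 u0 fd (fun x hx => ltac:(have := Q_le x (proj2 (andP hx)); lra)).
rewrite /f !fctE /GRing.scale /= expR0 expr0n /= mulr0 subr0 addr0 mul1r mulr0 addr0 subrr => h.
lra.
Qed.
Lemma key (y a : R) : y <= a -> 0 <= a -> a < 3 ->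
  (1 - a/3) * (expR y - 1 - y) <= y^+2/2.
Proof.
move=> ya a0 a3.
have G : 0 <= expR y - 1 - y by have := expR_ge1Dx y; lra.
have c1 : 0 < 1 - a/3 by lra.
have [y0|y0] := leP y 0.
  have h := H_le y y0.
  have c2 : 1 - a/3 <= 1 by lra.
  apply: (le_trans _ h).
  by rewrite -[X in _ <= X]mul1r ler_wpM2r.
have := F2_le (- y); rewrite oppr_le0 ltW // => /(_ isT) h.
have E : expR y * expR (- y) = 1 by rewrite expRxMexpNx_1.
have ey := expR_ge0 y.
have h2 : (6 - 2 * y) * expR y <= 6 + 4 * y + y^+2.
  have := ler_wpM2l ey h. rewrite mulrA E mul1r.
  rewrite sqrrN; lra.
have c3 : 1 - a/3 <= 1 - y/3 by lra.
apply: (le_trans (ler_wpM2r G c3)).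
lra.
Qed.
End S.
Section T.
Variable R : realType.
Variable K : nat.
Implicit Types (w x : 'I_K -> R).

Lemma avg_ge w x c : (forall k, 0 <= w k) -> \sum_k w k = 1 ->
  (forall k, w k != 0 -> c <= x k) -> c <= \sum_k w k * x k.
Proof.
move=> w0 w1 hc.
have -> : c = \sum_k w k * c by rewrite -mulr_suml w1 mul1r.
apply: ler_sum => k _.
have [->|nz] := eqVneq (w k) 0; first by rewrite !mul0r.
by rewrite ler_wpM2l // hc.
Qed.

Lemma avg_le w x c : (forall k, 0 <= w k) -> \sum_k w k = 1 ->
  (forall k, x k <= c) -> \sum_k w k * x k <= c.
Proof.
move=> w0 w1 hc.
have -> : c = \sum_k w k * c by rewrite -mulr_suml w1 mul1r.
by apply: ler_sum => k _; rewrite ler_wpM2l.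
Qed.

Lemma var_ge0 w x h : (forall k, 0 <= w k) -> 0 <= \sum_k w k * (x k - h) ^+ 2.
Proof. by move=> w0; apply: sumr_ge0 => k _; rewrite mulr_ge0 ?sqr_ge0. Qed.


Lemma gap_some w x e : (forall k, 0 <= w k) -> \sum_k w k = 1 ->
  (forall k, 0 <= x k <= 1) -> 0 < e ->
  let h := \sum_k w k * x k in
  let d := h - (- (1 / e) * ln (\sum_k w k * expR (- e * x k))) in
  [/\ 0 <= d, d <= 1 & d * (1 - e/3) <= e * (\sum_k w k * (x k - h) ^+ 2) / 2].
Proof.
move=> w0 w1 x01 e0 h d.
set S := \sum_k w k * expR (- e * x k).
have h0 : 0 <= h by apply: avg_ge => // k _; case/andP: (x01 k).
have h1 : h <= 1 by apply: avg_le => // k; case/andP: (x01 k).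
have Slow : expR (- e * h) <= S.
  apply: (@le_trans _ _ (\sum_k w k * (expR (- e * h) * (1 + (- e * x k - - e * h))))).
    set E := expR (- e * h).
    have -> : \sum_k w k * (E * (1 + (- e * x k - - e * h))) =
      \sum_k (E * e * h + E) * w k - \sum_k (E * e) * (w k * x k).
      by rewrite -sumrB; apply: eq_bigr => k _; ring.
    by rewrite -!mulr_sumr w1 -/h; lra.
  apply: ler_sum => k _; apply: ler_wpM2l => //.
  have := expR_ge1Dx (- e * x k - - e * h).
  move/(ler_wpM2l (expR_ge0 (- e * h))).
  by rewrite -expRD (_ : - e * h + (- e * x k - - e * h) = - e * x k) //; ring.
have Spos : 0 < S by apply: lt_le_trans Slow; exact: expR_gt0.
have lnSlow : - e * h <= ln S.
  by rewrite -[X in X <= _]expRK ler_ln ?posrE ?expR_gt0.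
have S1 : S <= 1.
  apply: avg_le => // k; rewrite expR_le1.
  by case/andP: (x01 k) => xk _; rewrite mulNr oppr_le0 mulr_ge0 // ltW.
have lnS0 : ln S <= 0 by exact: ln_le0.
have dE : e * d = e * h + ln S by rewrite /d; field; rewrite gt_eqF.
have d0 : 0 <= d.
  have : 0 <= e * d by rewrite dE; lra.
  by rewrite pmulr_rge0.
have d1 : d <= 1.
  have : e * d <= e * 1 by rewrite dE; nra.
  by rewrite ler_pM2l.
split => //.
set v := \sum_k w k * (x k - h) ^+ 2.
have v0 : 0 <= v by exact: var_ge0.
have [e3|e3] := leP 3 e.
  have : d * (1 - e / 3) <= 0 by rewrite mulr_ge0_le0 //; lra.
  move/le_trans; apply; rewrite mulr_ge0 // mulr_ge0 // ltW //.
pose y k := - e * x k + e * h.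
set T := \sum_k w k * expR (y k).
have TE : T = S * expR (e * h).
  by rewrite /T /S mulr_suml; apply: eq_bigr => k _; rewrite /y expRD mulrA.
have Tpos : 0 < T by rewrite TE mulr_gt0 ?expR_gt0.
have lnT : ln T = ln S + e * h by rewrite TE lnM ?posrE ?expR_gt0 // expRK.
have lnT1 : ln T <= T - 1.
  by have := expR_ge1Dx (ln T); rewrite lnK ?posrE //; lra.
have Wy : \sum_k w k * y k = 0.
  rewrite (eq_bigr (fun k => (e * h) * w k - e * (w k * x k))); last first.
    by move=> k _; rewrite /y; ring.
  by rewrite sumrB -!mulr_sumr w1 -/h; ring.
have T1 : T - 1 = \sum_k w k * (expR (y k) - 1 - y k).
  rewrite (eq_bigr (fun k => w k * expR (y k) - w k - w k * y k)); last first.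
    by move=> k _; ring.
  by rewrite !sumrB Wy w1 subr0.
have c0 : 0 < 1 - e / 3 by lra.
have B : (1 - e / 3) * (T - 1) <= e ^+ 2 * v / 2.
  rewrite T1 mulr_sumr /v mulr_sumr mulr_suml.
  apply: ler_sum => k _.
  have yk : y k <= e.
    by case/andP: (x01 k) => xk _; rewrite /y; nra.
  have := @key R (y k) e yk (ltW e0) e3.
  move/(ler_wpM2l (w0 k)).
  have -> : w k * ((1 - e / 3) * (expR (y k) - 1 - y k)) =
    (1 - e / 3) * (w k * (expR (y k) - 1 - y k)) by ring.
  have -> : w k * (y k ^+ 2 / 2) = e ^+ 2 * (w k * (x k - h) ^+ 2) / 2.
    by rewrite /y; ring.
  done.
have : (1 - e / 3) * (e * d) <= e ^+ 2 * v / 2.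
  apply: le_trans B; apply: ler_wpM2l; first exact: ltW.
  by rewrite dE addrC -lnT.
move=> H.
rewrite -(ler_pM2l e0).
have -> : e * (d * (1 - e / 3)) = (1 - e / 3) * (e * d) by ring.
by have -> : e * (e * v / 2) = e ^+ 2 * v / 2 by ring.
Qed.
End T.

Section U.
Variable R : realType.

Lemma fmin_le {K : nat} (f : 'I_K -> R) k : fmin f <= f k.
Proof.
move: f k; case: K => [|n] f k; first by case: k.
exact: bigmin_le.
Qed.

Lemma fmin_ex {K : nat} (f : 'I_K -> R) : (0 < K)%N -> exists k, fmin f = f k.
Proof.
case: K f => // n f _ /=.
apply: (big_ind (fun x => exists k, x = f k)); first by exists ord0.
  move=> x y [i ->] [j ->].
  have [hij|hij] := leP (f i) (f j).
    by exists i.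
  by exists j.
by move=> i _; exists i.
Qed.

Lemma Lcum_S {K : nat} (l : nat -> 'I_K -> R) t k :
  Lcum l t.+1 k = Lcum l t k + l t.+1 k.
Proof. by rewrite /Lcum big_nat_recr. Qed.

Lemma ewN_ge0 (K : nat) (Lp : 'I_K -> R) k : 0 <= ew None Lp k.
Proof. by rewrite /ew; case: eqP => // _; rewrite divr_ge0. Qed.

Lemma ewN_supp {K : nat} (Lp : 'I_K -> R) k : ew None Lp k != 0 -> Lp k = fmin Lp.
Proof. by rewrite /ew; have [->//|_] := eqVneq (Lp k) (fmin Lp); rewrite eqxx. Qed.

Lemma ewN_sum {K : nat} (Lp : 'I_K -> R) : (0 < K)%N -> \sum_k ew None Lp k = 1.
Proof.
move=> K0; rewrite /ew -big_mkcond /= sumr_const.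
set N := #|[set j | _]|.
have -> : #|[pred i | Lp i == fmin Lp]| = N.
  by rewrite /N cardsE.
have N0 : (0 < N)%N.
  have [k kE] := fmin_ex Lp K0.
  by apply/card_gt0P; exists k; rewrite inE kE.
have -> : (1 / (N%:R : R)) *+ N = (1 / N%:R) * N%:R by rewrite mulr_natr.
by rewrite mul1r mulVf // pnatr_eq0 -lt0n.
Qed.


Lemma round {K : nat} (l : nat -> 'I_K -> R) (t : nat) :
  (1 < K)%N -> (forall k, 0 <= l t.+1 k <= 1) -> 0 <= ah_Delta l t ->
  let dd := mixgap l (ah_eta K (ah_Delta l t)) t.+1 in
  let v := lossvar l (ah_eta K (ah_Delta l t)) t.+1 in
  [/\ 0 <= dd, dd <= 1 &
    2 * dd * ah_Delta l t + dd ^+ 2 <= v * ln (K%:R : R) + (1 + 2/3 * ln (K%:R : R)) * dd].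
Proof.
move=> K1 l01 D0 dd v.
have K0 : (0 < K)%N by apply: ltnW.
have lnK0 : 0 < ln (K%:R : R) by apply: ln_gt0; rewrite ltr1n.
rewrite /dd /v {dd v} /ah_eta.
set D := ah_Delta l t.
have [DE|Dn0] := eqVneq D 0.
  rewrite DE.
  set dd := mixgap l None t.+1.
  set v := lossvar l None t.+1.
  set w := wts l None t.+1.
  have w0 k : 0 <= w k by exact: ewN_ge0.
  have w1 : \sum_k w k = 1 by exact: ewN_sum.
  have v0 : 0 <= v by apply: var_ge0.
  set c := Lstar l t.+1 - Lstar l t.
  have ddE : dd = \sum_k w k * l t.+1 k - c by [].
  have cle : forall k, w k != 0 -> c <= l t.+1 k.
    move=> k /ewN_supp /= Ek.
    rewrite /c /Lstar.
    have := fmin_le (Lcum l t.+1) k.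
    rewrite Lcum_S Ek; lra.
  have c0 : 0 <= c.
    have [k kE] := fmin_ex (Lcum l t.+1) K0.
    rewrite /c /Lstar kE Lcum_S.
    have := fmin_le (Lcum l t) k.
    case/andP: (l01 k) => lk _; lra.
  have h1 : \sum_k w k * l t.+1 k <= 1.
    by apply: avg_le => // k; case/andP: (l01 k).
  have dd0 : 0 <= dd by rewrite ddE subr_ge0; apply: avg_ge.
  have dd1 : dd <= 1 by rewrite ddE; lra.
  split => //.
  rewrite mulr0 add0r.
  have : dd ^+ 2 <= dd by rewrite expr2 ler_piMr.
  have : 0 <= v * ln (K%:R : R) by rewrite mulr_ge0 // ltW.
  have : 0 <= ln (K%:R : R) * dd by rewrite mulr_ge0 // ltW.
  lra.
have Dpos : 0 < D by rewrite lt_def Dn0.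
set e := ln (K%:R : R) / D.
have e0 : 0 < e by rewrite divr_gt0.

set dd := mixgap l (Some e) t.+1.
set v := lossvar l (Some e) t.+1.
set w := wts l (Some e) t.+1.
set Lp := Lcum l t.
have wE k : w k = expR (- e * Lp k) / \sum_(j < K) expR (- e * Lp j) by [].
have Zpos : 0 < \sum_(j < K) expR (- e * Lp j).
  rewrite (bigD1 (Ordinal K0)) //= ltr_wpDr ?expR_gt0 //.
  by apply: sumr_ge0 => j _; rewrite expR_ge0.
have w0 k : 0 <= w k by rewrite wE divr_ge0 ?expR_ge0 // ltW.
have w1 : \sum_k w k = 1.
  under eq_bigr do rewrite wE.
  by rewrite -mulr_suml divff // gt_eqF.
have [d0 d1 B] := @gap_some R K w (l t.+1) e w0 w1 l01 e0.
split => //.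
have v0 : 0 <= v by apply: var_ge0.
have eD : e * D = ln (K%:R : R) by rewrite /e divfK // gt_eqF.
have H2 : 2 * D * (dd * (1 - e / 3)) <= 2 * D * (e * v / 2).
  by apply: ler_wpM2l => //; rewrite mulr_ge0 // ltW.
have E1 : 2 * D * (dd * (1 - e / 3)) = 2 * D * dd - 2 / 3 * ((e * D) * dd) by ring.
have E2 : 2 * D * (e * v / 2) = (e * D) * v by field.
rewrite E1 E2 eD in H2.
have : dd ^+ 2 <= dd by rewrite expr2 ler_piMr.
lra.
Qed.
End U.

Theorem lemma5 (R : realType) (K T : nat) (l : nat -> 'I_K -> R) :
  (1 <= K)%N -> (1 <= T)%N ->
  (forall (t : nat) (k : 'I_K), (1 <= t <= T)%N -> 0 <= l t k <= 1) ->
  ah_Delta l T ^+ 2 <=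
    ah_V l T * ln (K%:R : R) + (1 + 2 / 3 * ln (K%:R : R)) * ah_Delta l T.
Proof.
move=> K1 T1 l01.
have [K2|Kle1] := ltnP 1 K.
  have main : forall n, (n <= T)%N -> 0 <= ah_Delta l n /\
      ah_Delta l n ^+ 2 <= ah_V l n * ln (K%:R : R) + (1 + 2 / 3 * ln (K%:R : R)) * ah_Delta l n.
    elim => [_|n IH nT].
      by rewrite /ah_V big_geq //= expr0n /= mul0r mulr0 addr0.
    have [Dn0 Hn] := IH (ltnW nT).
    have l01' : forall k, 0 <= l n.+1 k <= 1 by move=> k; apply: l01; rewrite nT.
    have [d0 d1 Hd] := @round R K l n K2 l01' Dn0.
    have -> : ah_Delta l n.+1 = ah_Delta l n + mixgap l (ah_eta K (ah_Delta l n)) n.+1 by [].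
    have -> : ah_V l n.+1 = ah_V l n + lossvar l (ah_eta K (ah_Delta l n)) n.+1.
      by rewrite /ah_V big_nat_recr.
    split; first lra.
    move: Hn Hd.
    set D := ah_Delta l n; set dd := mixgap _ _ _; set V := ah_V l n; set v := lossvar _ _ _.
    set L := ln _.
    nra.
  by case: (main T (leqnn T)).
have KE : K = 1%N by apply/eqP; rewrite eqn_leq Kle1 K1.
subst K.
have D0 : forall n, ah_Delta l n = 0.
  elim => // n IH.
  rewrite /= IH /ah_eta eqxx add0r.
  rewrite /mixgap /hloss /mixloss big_ord1.
  have w1 := @ewN_sum R 1 (Lcum l n) (isT : (0 < 1)%N).
  rewrite big_ord1 in w1.
  have w1' : wts l None n.+1 ord0 = 1 := w1.
  rewrite w1' mul1r [n.+1.-1]/=.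
  rewrite /Lstar.
  have [k kE] := @fmin_ex R 1 (Lcum l n.+1) (isT : (0 < 1)%N).
  have [k' kE'] := @fmin_ex R 1 (Lcum l n) (isT : (0 < 1)%N).
  rewrite kE kE' Lcum_S (ord1 k) (ord1 k').
  ring.
rewrite D0 expr0n /= mulr0 addr0 mulr1n ln1 mulr0.
done.
Qed.
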